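(* Consider the two-bus model described in the context, with fixed parameters $0<\alpha_1\le\alpha_2$, $B_1,B_2>0$, $\overline f_1,\overline f_2>0$. Let $\boldsymbol\omega=(\overline{\mathbf q},\mathbf d)$ and $\boldsymbol\omega'=(\overline{\mathbf q}',\mathbf d)$ be two instances with the same demand profile $\mathbf d=(d_1,d_2)$, $d_1+d_2>0$, with $\overline q_2'=\overline q_2$ and $\overline q_1'\le \overline q_1$, both feasible for \textsf{ED-2b} and \textsf{SCED-2b}. Then $\mathsf{PoS}(\boldsymbol\omega')\le \mathsf{PoS}(\boldsymbol\omega)$.
   Context: Two-bus network: buses $v_1,v_2$ joined by two parallel lines $e_1,e_2$ with susceptances $B_1,B_2>0$ and thermal limits $\overline f_1,\overline f_2>0$. Bus $i\in\{1,2\}$ has a generator with capacity $\overline q_i\ge 0$ and linear cost $\alpha_i q_i$, and a demand $d_i\ge 0$; throughout $0<\alpha_1\le\alpha_2$ (bus 1 is the cheap bus). An instance is $\boldsymbol\omega=(\overline{\mathbf q},\mathbf d)$ with $\overline{\mathbf q}=(\overline q_1,\overline q_2)$, $\mathbf d=(d_1,d_2)$. Define $f^{\mathsf{ed}}:=(B_1+B_2)\min\{\overline f_1/B_1,\overline f_2/B_2\}$ and $f^{\mathsf{sc}}:=\min\{\overline f_1,\overline f_2\}$ (note $f^{\mathsf{sc}}\le f^{\mathsf{ed}}$). The economic dispatch problem \textsf{ED-2b} is: minimize $\alpha_1q_1+\alpha_2q_2$ over $(q_1,q_2)$ subject to $0\le q_1\le\overline q_1$, $0\le q_2\le\overline q_2$,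 $q_1+q_2=d_1+d_2$, and $-f^{\mathsf{ed}}\le q_1-d_1\le f^{\mathsf{ed}}$ (equivalently, under the DC model, the flows $B_k(q_1-d_1)/(B_1+B_2)$ on line $e_k$ satisfy $|{\cdot}|\le\overline f_k$, $k=1,2$). The security-constrained problem \textsf{SCED-2b} is the same problem with the additional constraint $-f^{\mathsf{sc}}\le q_1-d_1\le f^{\mathsf{sc}}$ (the flow $q_1-d_1$ on the surviving line after the outage of either line must respect that line's limit). Let $c^\star_{\mathsf{ed}}(\boldsymbol\omega)$ and $c^\star_{\mathsf{sc}}(\boldsymbol\omega)$ be the optimal values of \textsf{ED-2b} and \textsf{SCED-2b} for an instance $\boldsymbol\omega$ feasible for both. The price of security of $\boldsymbol\omega$ is $\mathsf{PoS}(\boldsymbol\omega):=c^\star_{\mathsf{sc}}(\boldsymbol\omega)/c^\star_{\mathsf{ed}}(\boldsymbol\omega)$. *)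

(* Defs.v *)
From Stdlib Require Import Reals Lra.
Open Scope R_scope.

(* Effective transfer limits of the two-bus network. *)
Definition f_ed (B1 B2 fb1 fb2 : R) : R := (B1 + B2) * Rmin (fb1 / B1) (fb2 / B2).
Definition f_sc (fb1 fb2 : R) : R := Rmin fb1 fb2.

Definition cost (a1 a2 q1 q2 : R) : R := a1 * q1 + a2 * q2.

Definition ed_feasible (B1 B2 fb1 fb2 qb1 qb2 d1 d2 q1 q2 : R) : Prop :=
  0 <= q1 <= qb1 /\ 0 <= q2 <= qb2 /\ q1 + q2 = d1 + d2 /\
  - f_ed B1 B2 fb1 fb2 <= q1 - d1 <= f_ed B1 B2 fb1 fb2.

(* Feasible set of SCED-2b: ED-2b plus the N-1 security constraint. *)
Definition sc_feasible (B1 B2 fb1 fb2 qb1 qb2 d1 d2 q1 q2 : R) : Prop :=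
  ed_feasible B1 B2 fb1 fb2 qb1 qb2 d1 d2 q1 q2 /\
  - f_sc fb1 fb2 <= q1 - d1 <= f_sc fb1 fb2.

Definition is_opt_value (a1 a2 : R) (F : R -> R -> Prop) (c : R) : Prop :=
  (exists q1 q2, F q1 q2 /\ cost a1 a2 q1 q2 = c) /\
  (forall q1 q2, F q1 q2 -> c <= cost a1 a2 q1 q2).

Definition feasible (F : R -> R -> Prop) : Prop := exists q1 q2, F q1 q2.

(* Main.v *)
Require Import Defs.
From Stdlib Require Import Reals Lra Psatz.
Open Scope R_scope.

Lemma opt_val (a1 a2 x qb2 d1 d2 g : R) (P : R -> R -> Prop) c
  (ha1 : 0 < a1) (ha12 : a1 <= a2)
  (HP : forall q1 q2, P q1 q2 <-> (0 <= q1 <= x /\ 0 <= q2 <= qb2 /\ q1 + q2 = d1 + d2 /\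
        - g <= q1 - d1 <= g))
  (Hf : feasible P) (Hc : is_opt_value a1 a2 P c) :
  0 <= Rmin x (Rmin (d1+d2) (d1+g)) <= d1 + d2 /\
  c = a2 * (d1+d2) - (a2 - a1) * Rmin x (Rmin (d1+d2) (d1+g)).
Proof.
  destruct Hf as [p1 [p2 Hp]]. apply HP in Hp.
  destruct Hc as [[r1 [r2 [Hr Hrc]]] Hlow]. pose proof (proj1 (HP r1 r2) Hr) as Hr'.
  set (m := Rmin x (Rmin (d1+d2) (d1+g))).
  assert (Hm1 : m <= x) by apply Rmin_l.
  assert (Hm2 : m <= d1+d2) by (eapply Rle_trans; [apply Rmin_r| apply Rmin_l]).
  assert (Hm3 : m <= d1+g) by (eapply Rle_trans; [apply Rmin_r| apply Rmin_r]).
  assert (Hm4 : forall y, y <= x -> y <= d1+d2 -> y <= d1+g -> y <= m).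
  { intros y h1 h2 h3. unfold m. apply Rmin_glb; [lra| apply Rmin_glb; lra]. }
  assert (Hpm : p1 <= m) by (apply Hm4; lra).
  assert (Hrm : r1 <= m) by (apply Hm4; lra).
  assert (Hfm : P m (d1+d2-m)) by (apply HP; lra).
  pose proof (Hlow _ _ Hfm) as Hl. unfold cost in *.
  split. lra.
  assert (r2 = d1+d2-r1) by lra. subst r2.
  nra.
Qed.

Lemma sc_le_ed (B1 B2 fb1 fb2 : R) : 0 < B1 -> 0 < B2 -> 0 < fb1 -> 0 < fb2 ->
  f_sc fb1 fb2 <= f_ed B1 B2 fb1 fb2.
Proof.
  intros. unfold f_sc, f_ed, Rmin.
  destruct (Rle_dec fb1 fb2); destruct (Rle_dec (fb1/B1) (fb2/B2)).
  - replace ((B1+B2)*(fb1/B1)) with (fb1 + B2*(fb1/B1)) by (field; lra).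
    assert (0 <= fb1/B1) by (apply Rlt_le, Rdiv_lt_0_compat; lra). nra.
  - replace ((B1+B2)*(fb2/B2)) with (fb2 + B1*(fb2/B2)) by (field; lra).
    assert (0 <= fb2/B2) by (apply Rlt_le, Rdiv_lt_0_compat; lra). nra.
  - replace ((B1+B2)*(fb1/B1)) with (fb1 + B2*(fb1/B1)) by (field; lra).
    assert (0 <= fb1/B1) by (apply Rlt_le, Rdiv_lt_0_compat; lra). nra.
  - replace ((B1+B2)*(fb2/B2)) with (fb2 + B1*(fb2/B2)) by (field; lra).
    assert (0 <= fb2/B2) by (apply Rlt_le, Rdiv_lt_0_compat; lra). nra.
Qed.

Lemma key (A e x x' U V : R) : 0 <= e -> x' <= x -> V <= U ->
  0 < A - e * Rmin x U -> 0 < A - e * Rmin x' U -> 0 <= Rmin x' V ->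
  (A - e * Rmin x' V) * (A - e * Rmin x U) <= (A - e * Rmin x V) * (A - e * Rmin x' U).
Proof.
  intros He Hx HV H1 H2 H3.
  destruct (Rle_dec x V).
  - rewrite (Rmin_left x V), (Rmin_left x' V), (Rmin_left x U), (Rmin_left x' U) by lra. lra.
  - destruct (Rle_dec x' V).
    + rewrite (Rmin_right x V), (Rmin_left x' V), (Rmin_left x' U) by lra.
      rewrite (Rmin_left x' U) in H2 by lra.
      assert (V <= Rmin x U) by (apply Rmin_glb; lra).
      set (m := Rmin x U) in *.
      assert (0 <= e * (m - V)) by (apply Rmult_le_pos; lra).
      assert (0 <= (A - e*x') * (e * (m - V))) by (apply Rmult_le_pos; lra).
      nra.
    + rewrite (Rmin_right x V), (Rmin_right x' V) by lra.
      assert (Rmin x' U <= Rmin x U) by (unfold Rmin; repeat destruct Rle_dec; lra).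
      assert (V <= Rmin x' U) by (apply Rmin_glb; lra).
      set (m := Rmin x U) in *. set (m' := Rmin x' U) in *.
      assert (0 <= e * (m' - V)) by (apply Rmult_le_pos; lra).
      assert (0 <= e * (m - m')) by (apply Rmult_le_pos; lra).
      assert (0 <= (A - e*V) * (e * (m - m'))) by (apply Rmult_le_pos; nra).
      nra.
Qed.

Theorem lemma1 (a1 a2 B1 B2 fb1 fb2 : R)
  (ha1 : 0 < a1) (ha12 : a1 <= a2) (hB1 : 0 < B1) (hB2 : 0 < B2)
  (hf1 : 0 < fb1) (hf2 : 0 < fb2)
  (qb1 qb2 qb1' d1 d2 : R)
  (hqb1 : 0 <= qb1) (hqb2 : 0 <= qb2) (hqb1' : 0 <= qb1')
  (hd1 : 0 <= d1) (hd2 : 0 <= d2) (hd : 0 < d1 + d2)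
  (hq1' : qb1' <= qb1)
  (hfe : feasible (ed_feasible B1 B2 fb1 fb2 qb1 qb2 d1 d2))
  (hfs : feasible (sc_feasible B1 B2 fb1 fb2 qb1 qb2 d1 d2))
  (hfe' : feasible (ed_feasible B1 B2 fb1 fb2 qb1' qb2 d1 d2))
  (hfs' : feasible (sc_feasible B1 B2 fb1 fb2 qb1' qb2 d1 d2))
  (ced csc ced' csc' : R)
  (Hced : is_opt_value a1 a2 (ed_feasible B1 B2 fb1 fb2 qb1 qb2 d1 d2) ced)
  (Hcsc : is_opt_value a1 a2 (sc_feasible B1 B2 fb1 fb2 qb1 qb2 d1 d2) csc)
  (Hced' : is_opt_value a1 a2 (ed_feasible B1 B2 fb1 fb2 qb1' qb2 d1 d2) ced')
  (Hcsc' : is_opt_value a1 a2 (sc_feasible B1 B2 fb1 fb2 qb1' qb2 d1 d2) csc') :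
  csc' / ced' <= csc / ced.
Proof.
  pose proof (sc_le_ed B1 B2 fb1 fb2 hB1 hB2 hf1 hf2) as HSF.
  set (F := f_ed B1 B2 fb1 fb2) in *. set (S := f_sc fb1 fb2) in *.
  assert (HS0 : 0 < S) by (unfold S, f_sc, Rmin; destruct Rle_dec; lra).
  assert (Hed : forall x, forall q1 q2, ed_feasible B1 B2 fb1 fb2 x qb2 d1 d2 q1 q2 <->
     (0 <= q1 <= x /\ 0 <= q2 <= qb2 /\ q1 + q2 = d1 + d2 /\ - F <= q1 - d1 <= F))
    by (intros; unfold ed_feasible; tauto).
  assert (Hsc : forall x, forall q1 q2, sc_feasible B1 B2 fb1 fb2 x qb2 d1 d2 q1 q2 <->
     (0 <= q1 <= x /\ 0 <= q2 <= qb2 /\ q1 + q2 = d1 + d2 /\ - S <= q1 - d1 <= S))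
    by (intros; unfold sc_feasible, ed_feasible; fold F S; split; intros; lra).
  destruct (opt_val _ _ _ _ _ _ _ _ _ ha1 ha12 (Hed qb1) hfe Hced) as [E1 E1'].
  destruct (opt_val _ _ _ _ _ _ _ _ _ ha1 ha12 (Hsc qb1) hfs Hcsc) as [E2 E2'].
  destruct (opt_val _ _ _ _ _ _ _ _ _ ha1 ha12 (Hed qb1') hfe' Hced') as [E3 E3'].
  destruct (opt_val _ _ _ _ _ _ _ _ _ ha1 ha12 (Hsc qb1') hfs' Hcsc') as [E4 E4'].
  assert (Hc : 0 < ced) by nra.
  assert (Hc' : 0 < ced') by nra.
  assert (Key : csc' * ced <= csc * ced').
  { rewrite E1', E2', E3', E4'. clear - E1 E2 E3 E4 HSF hq1' ha12 ha1 hd Hc Hc' E1' E3'. rewrite E1' in Hc. rewrite E3' in Hc'.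
    set (D := d1 + d2) in *.
    assert (Rmin D (d1 + S) <= Rmin D (d1 + F)) by (unfold Rmin; repeat destruct Rle_dec; lra).
    apply key; try lra; nra. }
  replace (csc / ced) with (csc' / ced' + (csc * ced' - csc' * ced) / (ced * ced'))
    by (field; lra).
  assert (0 <= (csc * ced' - csc' * ced) / (ced * ced')).
  { unfold Rdiv; apply Rmult_le_pos; [lra| apply Rlt_le, Rinv_0_lt_compat; nra]. }
  lra.
Qed.
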